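(* Let $n,a,h,t$ be positive integers with $h\le n$ and $a\le t\le ah$. Let $\mathcal C\subseteq\mathbb Z^n$ be an $(a,h,t)$-AED code in $\mathbb Z^n$. Then its upper density satisfies $\overline{\mu}(\mathcal C)\le \frac{1}{t+1}$.
   Context: Channel over the alphabet $\mathbb Z$: an input $\mathbf x=(x_1,\dots,x_n)\in\mathbb Z^n$ can produce any output $\mathbf y\in\mathbb Z^n$ satisfying (1) $0\le y_i-x_i\le a$ for all $i$; (2) $\sum_{i=1}^n \mathbb 1_{\{y_i\ne x_i\}}\le h$; (3) $\sum_{i=1}^n (y_i-x_i)\le t$. Such error vectors $\mathbf y-\mathbf x$ are called $(a,h,t)$-asymmetric errors, and $\mathrm{Out}(\mathbf x)$ denotes the set of all such outputs $\mathbf y$. A code $\mathcal C\subseteq\mathbb Z^n$ is an $(a,h,t)$-AED (asymmetric-error-detecting) code if for all $\mathbf x\in\mathcal C$ and all $\mathbf y\in\mathrm{Out}(\mathbf x)$ with $\mathbf y\neq\mathbf x$, we have $\mathbf y\notin\mathcal C$. The upper density of $\mathcal C\subseteq\mathbb Z^n$ is $\overline{\mu}(\mathcal C)=\limsup_{k\to\infty}\frac{|\mathcal C\cap\{-k,\dots,k\}^n|}{(2k+1)^n}$. *)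

(* Defs.v *)
From HB Require Import structures.
From mathcomp Require Import all_boot all_order all_algebra.
Set Implicit Arguments. Unset Strict Implicit. Unset Printing Implicit Defensive.
Import Order.TTheory GRing.Theory Num.Theory.
Local Open Scope ring_scope.

Definition vec (n : nat) := {ffun 'I_n -> int}.

Definition asym_err (n a h t : nat) (e : 'I_n -> int) : bool :=
  [&& [forall i, (0 <= e i) && (e i <= a%:Z)],
      (#|[set i | e i != 0]| <= h)%N &
      (\sum_(i < n) e i <= t%:Z)].

Definition in_Out (n a h t : nat) (x y : vec n) : bool :=
  asym_err a h t (fun i => y i - x i).

Definition AED (n a h t : nat) (C : pred (vec n)) : Prop :=
  forall x y : vec n, C x -> in_Out a h t x y -> y != x -> ~~ C y.

(* |C ∩ {-k,...,k}^n| : points of the box are parametrised by v i - k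
   with v i in 'I_(2k+1). *)
Definition box_count (n : nat) (C : pred (vec n)) (k : nat) : nat :=
  #|[set v : {ffun 'I_n -> 'I_(k.*2.+1)} |
      C [ffun i => (v i)%:Z - k%:Z]]|.

Definition box_ratio (n : nat) (C : pred (vec n)) (k : nat) : rat :=
  (box_count C k)%:R / ((k.*2.+1) ^ n)%:R.

(* limsup_{k->oo} u k <= L  (the sequence is bounded, so this is the usual
   meaning of the upper density being at most L). *)
Definition limsup_le (u : nat -> rat) (L : rat) : Prop :=
  forall eps : rat, 0 < eps -> exists K : nat, forall k : nat, (K <= k)%N -> u k <= L + eps.

(* Main.v *)
Require Import Defs.
From mathcomp Require Import all_boot all_order all_algebra.
From mathcomp Require Import zify ring lra.
From Stdlib Require Import FunctionalExtensionality.
Import Order.TTheory GRing.Theory Num.Theory.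
Local Open Scope ring_scope.

Definition V (a j i : nat) : nat := minn a (j - a * i).

Lemma sumV (a j m : nat) : (\sum_(i < m) V a j i = minn j (a * m))%N.
Proof.
elim: m => [|m IH]; first by rewrite big_ord0 muln0 minn0.
rewrite big_ord_recr /= IH /V mulnS. lia.
Qed.

Lemma V_mono a j1 j2 i : (j1 <= j2)%N -> (V a j1 i <= V a j2 i)%N.
Proof. rewrite /V; lia. Qed.

Lemma V_le a j i : (V a j i <= a)%N.
Proof. rewrite /V; lia. Qed.

Lemma Posz_sum n (F : 'I_n -> nat) : \sum_(i < n) (F i)%:Z = (\sum_(i < n) F i)%N%:Z.
Proof. by rewrite -natz natr_sum; apply: eq_bigr => i _; rewrite natz. Qed.

Lemma err_ok n a h t j1 j2 : (0 < a)%N -> (h <= n)%N -> (t <= a * h)%N ->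
  (j1 <= j2)%N -> (j2 <= t)%N ->
  asym_err a h t (fun i : 'I_n => (V a j2 i)%:Z - (V a j1 i)%:Z).
Proof.
move=> a0 hn tah j12 j2t.
apply/and3P; split.
- apply/forallP => i; rewrite subzn ?V_mono // !lez_nat.
  have := V_le a j2 i; lia.
- have hh : [set i : 'I_n | (V a j2 i)%:Z - (V a j1 i)%:Z != 0] \subset
            [set widen_ord hn i | i : 'I_h].
    apply/subsetP => i; rewrite inE => nz.
    have ih : (i < h)%N.
      rewrite ltnNge; apply/negP => hi; move: nz.
      have -> : V a j2 i = 0%N by rewrite /V; nia.
      have -> : V a j1 i = 0%N by rewrite /V; nia.
      by rewrite subrr eqxx.
    apply/imsetP; exists (Ordinal ih) => //; exact: val_inj.
  apply: (leq_trans (subset_leq_card hh)).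
  by apply: (leq_trans (leq_imset_card _ _)); rewrite card_ord.
- rewrite (eq_bigr (fun i : 'I_n => (V a j2 i - V a j1 i)%N%:Z)); last first.
    by move=> i _; rewrite subzn ?V_mono.
  rewrite Posz_sum lez_nat.
  have e : (\sum_(i < n) (V a j2 i - V a j1 i) + \sum_(i < n) V a j1 i
            = \sum_(i < n) V a j2 i)%N.
    rewrite -big_split /=; apply: eq_bigr => i _; rewrite subnK ?V_mono //.
  move: e; rewrite !sumV.
  have : (a * h <= a * n)%N by rewrite leq_mul2l hn orbT.
  lia.
Qed.

Definition pt n a k (w : {ffun 'I_n -> 'I_(k.*2 + a).+1}) (j : nat) : vec n :=
  [ffun i => (w i)%:Z - k%:Z - a%:Z + (V a j i)%:Z].

Arguments pt {n a k}.

Lemma one_per_w n a h t k (C : pred (vec n)) (w : {ffun 'I_n -> 'I_(k.*2 + a).+1}) :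
  (0 < a)%N -> (h <= n)%N -> (t <= a * h)%N -> AED a h t C ->
  (\sum_(j < t.+1) (C (pt w j) : nat) <= 1)%N.
Proof.
move=> a0 hn tah aed.
have key : forall j1 j2 : 'I_t.+1, (j1 < j2)%N -> C (pt w j1) -> C (pt w j2) -> False.
  move=> j1 j2 lt12 c1 c2.
  have j2t : (j2 <= t)%N by rewrite -ltnS.
  have io : (j1 %/ a < n)%N.
    rewrite ltn_divLR //; apply: leq_trans (_ : (h * a <= n * a)%N); last by rewrite leq_mul2r hn orbT.
    rewrite mulnC; lia.
  have H := aed (pt w j1) (pt w j2) c1.
  suff : ~~ C (pt w j2) by rewrite c2.
  apply: H.
    rewrite /in_Out.
    have -> : (fun i => pt w j2 i - pt w j1 i) = (fun i : 'I_n => (V a j2 i)%:Z - (V a j1 i)%:Z).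
      by apply: functional_extensionality => i; rewrite !ffunE; ring.
    by apply: err_ok => //; exact: ltnW.
  apply/eqP => e; have := congr1 (fun f : vec n => f (Ordinal io)) e.
  rewrite !ffunE => /addrI [].
  rewrite /V /=; move: (j1 : nat) (j2 : nat) lt12 => x y lxy.
  have := divn_eq x a; have := ltn_pmod x a0; lia.
rewrite -(big_mkcond) /= sum1dep_card.
apply/card_le1P => j1; rewrite inE => c1 j2; rewrite !inE.
apply/idP/eqP => [c2|->//].
case: (ltngtP j1 j2) => [l|l|/val_inj //].
- by case: (key _ _ l c1 c2).
- by case: (key _ _ l c2 c1).
Qed.

Lemma count_bound n a h t k (C : pred (vec n)) :
  (0 < a)%N -> (h <= n)%N -> (t <= a * h)%N -> AED a h t C ->
  (t.+1 * box_count C k <= ((k.*2 + a).+1) ^ n)%N.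
Proof.
move=> a0 hn tah aed.
set B := [set v : {ffun 'I_n -> 'I_(k.*2.+1)} | C [ffun i => (v i)%:Z - k%:Z]].
have step : forall j : 'I_t.+1,
    (#|B| <= #|[set w : {ffun 'I_n -> 'I_(k.*2 + a).+1} | C (pt w j)]|)%N.
  move=> j.
  pose f (v : {ffun 'I_n -> 'I_(k.*2.+1)}) : {ffun 'I_n -> 'I_(k.*2 + a).+1} :=
    [ffun i => inord (v i + a - V a j i)].
  have fE : forall v i, nat_of_ord (f v i) = (v i + a - V a j i)%N.
    move=> v i; rewrite ffunE inordK //.
    have := ltn_ord (v i); have := V_le a j i; lia.
  have finj : injective f.
    move=> v1 v2 e; apply/ffunP => i; apply: val_inj => /=.
    have := congr1 (fun g : {ffun 'I_n -> 'I_(k.*2 + a).+1} => nat_of_ord (g i)) e => /=; rewrite !fE.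
    have := V_le a j i; lia.
  rewrite -(card_imset _ finj); apply: subset_leq_card.
  apply/subsetP => w /imsetP [v]; rewrite !inE => cv ->.
  suff -> : pt (f v) j = [ffun i => (v i)%:Z - k%:Z] by [].
  apply/ffunP => i; rewrite [LHS]ffunE fE [RHS]ffunE -subzn; last first.
    have := V_le a j i; lia.
  rewrite PoszD; ring.
have e1 : forall j : 'I_t.+1, #|[set w : {ffun 'I_n -> 'I_(k.*2 + a).+1} | C (pt w j)]|
   = (\sum_(w : {ffun 'I_n -> 'I_(k.*2 + a).+1}) (C (pt w j) : nat))%N.
  move=> jj; transitivity (\sum_(w : {ffun 'I_n -> 'I_(k.*2 + a).+1} | C (pt w jj)) 1)%N; first by rewrite sum1dep_card.
  by rewrite big_mkcond.
apply: (@leq_trans (\sum_(j < t.+1) #|B|)%N).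
  by rewrite sum_nat_const card_ord.
apply: (@leq_trans (\sum_(j < t.+1) #|[set w : {ffun 'I_n -> 'I_(k.*2 + a).+1} | C (pt w j)]|)%N).
  by apply: leq_sum => j _; exact: step.
under eq_bigr do rewrite e1.
rewrite exchange_big /=.
apply: (@leq_trans (\sum_(w : {ffun 'I_n -> 'I_(k.*2 + a).+1}) 1)%N).
  apply: leq_sum => w _; exact: one_per_w hn tah aed.
by rewrite sum1_card card_ffun !card_ord.
Qed.

Lemma pow_bound (N a n : nat) : (a <= N)%N ->
  (N * (N + a) ^ n <= N * N ^ n + (2 ^ n - 1) * a * N ^ n)%N.
Proof.
move=> aN; elim: n => [|n IH]; first by rewrite !expn0; lia.
rewrite !expnS.
have p1 : (1 <= 2 ^ n)%N by rewrite expn_gt0.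
set X := ((N + a) ^ n)%N in IH *; set P := (N ^ n)%N in IH *.
set c := (2 ^ n - 1)%N in IH *.
have -> : (2 * 2 ^ n - 1 = 2 * c + 1)%N by rewrite /c; lia.
nia.
Qed.

Lemma eps_bound (eps : rat) : 0 < eps -> 1 <= eps * (`|denq eps|%N)%:R.
Proof.
move=> e0.
have dp : 0 < denq eps by [].
have -> : (`|denq eps|%N)%:R = (denq eps)%:~R :> rat.
  by rewrite natr_absz gtr0_norm.
have := divq_num_den eps => E.
rewrite -{1}E mulfVK; last by rewrite intr_eq0 gt_eqF.
have : 0 < numq eps by rewrite numq_gt0.
by rewrite -[1]/(1%:~R) ler_int.
Qed.

Theorem theorem1 (n a h t : nat) (C : pred (vec n)) :
  (0 < n)%N -> (0 < a)%N -> (0 < h)%N -> (0 < t)%N ->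
  (h <= n)%N -> (a <= t)%N -> (t <= a * h)%N ->
  AED a h t C ->
  limsup_le (box_ratio C) (1 / (t.+1)%:R).
Proof.
move=> n0 a0 h0 t0 hn at' tah aed eps e0.
set d := `|denq eps|%N.
set c := (2 ^ n - 1)%N.
exists (a + c * a * d)%N => k kK.
rewrite /box_ratio.
set N := k.*2.+1.
set bc := box_count C k.
have aN : (a <= N)%N by rewrite /N -addnn; lia.
have hcnt := count_bound n a h t k C a0 hn tah aed.
have EM : (k.*2 + a).+1 = (N + a)%N by rewrite /N addSn.
rewrite EM -/bc in hcnt.
have hpb := pow_bound N a n aN.
have H1n : (N * (t.+1 * bc) <= N * N ^ n + c * a * N ^ n)%N.
  exact: leq_trans (leq_mul (leqnn N) hcnt) hpb.
have H2n : (c * a * d <= N)%N by rewrite /N -addnn; lia.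
move: H1n; rewrite -(ler_nat rat) [X in _ <= X]natrD !natrM => H1.
move: H2n; rewrite -(ler_nat rat) !natrM => H2.
have He := eps_bound eps e0; rewrite -/d in He.
set P := ((N ^ n)%N)%:R : rat in H1 *.
set T := (t.+1)%:R : rat in H1 *.
set Nr := N%:R : rat in H1 H2 *.
set b := bc%:R : rat in H1 *.
set ca := (c%:R * a%:R) : rat in H1 H2.
have P0 : 0 < P by rewrite ltr0n expn_gt0.
have T1 : 1 <= T by rewrite ler1n.
have N0 : 0 < Nr by rewrite ltr0n.
have b0 : 0 <= b by rewrite ler0n.
have ca0 : 0 <= ca by rewrite /ca mulr_ge0 // ler0n.
have H2' : ca <= eps * Nr.
  apply: le_trans (_ : ca * (eps * d%:R) <= _).
    by rewrite -{1}[ca]mulr1 ler_wpM2l.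
  have -> : ca * (eps * d%:R) = eps * (ca * d%:R) by ring.
  by rewrite ler_wpM2l // ltW.
have H3 : T * b <= P + eps * P.
  have : Nr * (T * b) <= Nr * (P + eps * P).
    apply: le_trans H1 _; rewrite mulrDr lerD2l mulrA [Nr * eps]mulrC.
    by rewrite ler_wpM2r // ltW.
  by rewrite ler_pM2l.
have T0 : 0 < T by lra.
rewrite ler_pdivrMr //.
have H4 : b <= (P + eps * P) / T by rewrite ler_pdivlMr // mulrC.
apply: le_trans H4 _.
have u1 : T^-1 <= 1 by rewrite invf_le1.
have u0 : 0 <= T^-1 by rewrite invr_ge0 ltW.
have w0 : 0 <= eps * P by rewrite mulr_ge0 // ltW.
rewrite mulrDl mul1r mulrDl [P / T]mulrC.
rewrite lerD2l -{2}[eps * P]mulr1 ler_wpM2l //.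
Qed.
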